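(* Let $G$ be a finite connected graph and $F$ a valid matching rule for $G$. Then there exists a prefix matching of $\Gamma$ generated by $F$.
   Context: $G$ is a finite simple connected graph with shortest-path distance $d$; $\ell(x_0,\dots,x_k)=\sum_{i=0}^{k-1}d(x_i,x_{i+1})$. A sequence is an element of $I_{k,l}(G)=\{(x_0,\dots,x_k)\in V(G)^{k+1}:x_i\ne x_{i+1}\ \forall i,\ \ell(x_0,\dots,x_k)=l\}$ for some $k,l\ge0$. Let $\Gamma$ be the directed graph whose vertices are all sequences, with an edge $a\to b$ whenever $a=(x_0,\dots,x_k)$ and $b=(x_0,\dots,\hat x_i,\dots,x_k)$ for some $1\le i\le k-1$ with $\ell(b)=\ell(a)$. A matching is a set of pairwise vertex-disjoint edges of $\Gamma$. Given a matching, the matching state of a sequence $(x_0,\dots,x_k)$ is: ''unmatched'' if it lies on no matching edge; ''insert$(i,v)$'' if it is matched to $(x_0,\dots,x_i,v,x_{i+1},\dots,x_k)$; ''delete$(i)$'' if it is matched to $(x_0,\dots,\hat x_i,\dots,x_k)$. A prefix matching is a matching such that whenever $(x_0,\dots,x_k)$ has state insert$(i,v)$ (resp. delete$(i)$), every sequence of the form $(x_0,\dots,x_{i+1},y_{i+2},\dots,y_{k'})$ has the same state insert$(i,v)$ (resp. delete$(i)$). A matching rule is a function $F$ from sequences to the set of symbols $\{\epsilon\}\cup\{\iota(v):v\in V(G)\}\cup\{\delta\}$. A prefix matching $M$ is generated by $F$ if for every sequence $(x_0,\dots,x_k)$, $k\ge1$, whose prefix $(x_0,\dots,x_{k-1})$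 is unmatched in $M$, the state of $(x_0,\dots,x_k)$ is insert$(k-1,v)$ iff $F(x_0,\dots,x_k)=\iota(v)$, and is delete$(k-1)$ iff $F(x_0,\dots,x_k)=\delta$. $F$ is valid if: (1) whenever $F(x_0,\dots,x_k)=\iota(v)$, then $v\notin\{x_{k-1},x_k\}$, $d(x_{k-1},v)+d(v,x_k)=d(x_{k-1},x_k)$, $F(x_0,\dots,x_{k-1},v)=\epsilon$ and $F(x_0,\dots,x_{k-1},v,x_k)=\delta$; (2) whenever $F(x_0,\dots,x_k)=\delta$, then $d(x_{k-2},x_{k-1})+d(x_{k-1},x_k)=d(x_{k-2},x_k)$ and $F(x_0,\dots,x_{k-2},x_k)=\iota(x_{k-1})$. *)

(* Defs.v *)
From mathcomp Require Import all_boot.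
Set Implicit Arguments. Unset Strict Implicit. Unset Printing Implicit Defensive.

Section Defs.
Variables (T : finType) (e : rel T).

Fixpoint reach (n : nat) (x y : T) : bool :=
  if n is n'.+1 then [exists z, e x z && reach n' z y] else x == y.

(* shortest-path distance (least n with a walk of length n; in a connected
   graph this is < #|T|) *)
Definition dist (x y : T) : nat := find (fun n => reach n x y) (iota 0 #|T|.+1).

Definition len (s : seq T) : nat :=
  if s is x :: t then sumn (pairmap dist x t) else 0.

Definition isseq (s : seq T) : bool :=
  (s != [::]) && sorted (fun a b => a != b) s.

Definition del (i : nat) (s : seq T) : seq T := take i s ++ drop i.+1 s.
Definition ins (i : nat) (v : T) (s : seq T) : seq T := take i.+1 s ++ v :: drop i.+1 s.

Definition gedge (a b : seq T) : Prop :=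
  [/\ isseq a, isseq b &
   exists i, [/\ 1 <= i, i.+2 <= size a, b = del i a & len b = len a]].

(* a matching: a set of pairwise vertex-disjoint edges of Gamma,
   given as the relation M a b  <->  (a -> b) is in the matching *)
Definition is_matching (M : seq T -> seq T -> Prop) : Prop :=
  (forall a b, M a b -> gedge a b) /\
  (forall a b a' b', M a b -> M a' b' ->
     (a = a' \/ a = b' \/ b = a' \/ b = b') -> a = a' /\ b = b').

Definition unmatched (M : seq T -> seq T -> Prop) (s : seq T) : Prop :=
  ~ exists t, M s t \/ M t s.
Definition st_ins (M : seq T -> seq T -> Prop) (s : seq T) (i : nat) (v : T) : Prop :=
  M (ins i v s) s.
Definition st_del (M : seq T -> seq T -> Prop) (s : seq T) (i : nat) : Prop :=
  M s (del i s).

Definition is_prefix_matching (M : seq T -> seq T -> Prop) : Prop :=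
  is_matching M /\
  (forall s i v, isseq s -> st_ins M s i v ->
     forall t, isseq t -> take i.+2 t = take i.+2 s -> st_ins M t i v) /\
  (forall s i, isseq s -> st_del M s i ->
     forall t, isseq t -> take i.+2 t = take i.+2 s -> st_del M t i).

End Defs.

Inductive symb (T : Type) := Eps | Iota of T | Delta.
Arguments Eps {T}. Arguments Delta {T}.

Section Rules.
Variables (T : finType) (e : rel T).
Local Notation d := (dist e).

Definition generated_by (F : seq T -> symb T) (M : seq T -> seq T -> Prop) : Prop :=
  forall s, isseq s -> 2 <= size s -> unmatched M (take (size s).-1 s) ->
    (forall v, st_ins M s (size s).-2 v <-> F s = Iota v) /\
    (st_del M s (size s).-2 <-> F s = Delta).

Definition valid_rule (F : seq T -> symb T) : Prop :=
  (forall s v, isseq s -> 2 <= size s -> F s = Iota v ->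
     let xk := nth v s (size s).-1 in
     let xk1 := nth v s (size s).-2 in
     let pre := take (size s).-1 s in
     [/\ v != xk1, v != xk,
         d xk1 v + d v xk = d xk1 xk,
         F (rcons pre v) = Eps &
         F (rcons (rcons pre v) xk) = Delta]) /\
  (forall s, isseq s -> F s = Delta ->
     3 <= size s /\
     forall x0 : T,
     let xk := nth x0 s (size s).-1 in
     let xk1 := nth x0 s (size s).-2 in
     let xk2 := nth x0 s (size s - 3) in
     d xk2 xk1 + d xk1 xk = d xk2 xk /\
     F (rcons (take (size s).-2 s) xk) = Iota xk1).

End Rules.

(* Main.v *)
Require Import Defs.
From mathcomp Require Import all_boot zify.
Set Implicit Arguments. Unset Strict Implicit. Unset Printing Implicit Defensive.

Section Gen.
Variable T : finType.
Implicit Types (a l s : seq T).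

Lemma take_szE m a l n : n = m + size a -> take n (a ++ l) = a ++ take m l.
Proof. move=> ->; rewrite take_cat ltnNge leq_addl /=; congr (_ ++ _); congr take; lia. Qed.

Lemma drop_szE m a l n : n = m + size a -> drop n (a ++ l) = drop m l.
Proof. move=> ->; rewrite drop_cat ltnNge leq_addl /=; congr drop; lia. Qed.

Lemma nth_szE x0 m a l n : n = m + size a -> nth x0 (a ++ l) n = nth x0 l m.
Proof. move=> ->; rewrite nth_cat ltnNge leq_addl /=; congr nth; lia. Qed.

Lemma take_cat_eq a x l l' n : n <= (size a).+1 -> take n (a ++ x :: l) = take n (a ++ x :: l').
Proof.
move=> hn; rewrite !take_cat; case: ifP => // /negbT; rewrite -leqNgt => h.
have [->|->] : (n - size a = 0 \/ n - size a = 1) by lia.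
all: by rewrite /= ?take0.
Qed.

Lemma sorted_mid (r : rel T) a x l : sorted r (a ++ x :: l) = sorted r (rcons a x) && path r x l.
Proof.
case: a => [|a0 a] //=; rewrite cat_path rcons_path /=; by rewrite andbA.
Qed.

Lemma size_ins i v s : i < size s -> size (ins i v s) = (size s).+1.
Proof. move=> h; rewrite /ins size_cat /= size_take size_drop; case: ifP; lia. Qed.

Lemma nth_ins_lt x0 i v s k : k <= i -> k < size s -> nth x0 (ins i v s) k = nth x0 s k.
Proof.
move=> h1 h2; have H : k < size (take i.+1 s) by rewrite size_take; case: ifP; lia.
by rewrite /ins nth_cat H nth_take.
Qed.

Lemma nth_ins_eq x0 i v s : i < size s -> nth x0 (ins i v s) i.+1 = v.
Proof.
move=> h; rewrite /ins nth_cat size_takel // ltnn subnn. by [].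
Qed.

Lemma nth_ins_gt x0 i v s : i < size s -> nth x0 (ins i v s) i.+2 = nth x0 s i.+1.
Proof.
move=> h; rewrite /ins nth_cat size_takel // ltnNge leqnSn /=.
have -> : i.+2 - i.+1 = 1 by lia. by rewrite /= nth_drop addn0.
Qed.

Lemma sorted_nth_neq x0 s k : sorted (fun p q : T => p != q) s -> k.+1 < size s -> nth x0 s k != nth x0 s k.+1.
Proof. by move=> /(sortedP x0) h /h. Qed.

Lemma ins_inj i v i' v' s : sorted (fun p q : T => p != q) (ins i v s) -> i'.+2 <= size s ->
  ins i v s = ins i' v' s -> i = i' /\ v = v'.
Proof.
move=> hs hi E.
case: (ltngtP i i') => h.
- exfalso. have hsz : i < size s by lia.
  have := @sorted_nth_neq v _ i.+1 hs; rewrite size_ins // nth_ins_gt // {1}E.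
  rewrite (@nth_ins_lt v i' v' s i.+1); try lia.
  move=> H; have := H ltac:(lia); by rewrite eqxx.
- exfalso.
  have := @sorted_nth_neq v _ i'.+1 hs; rewrite {1 3}E size_ins; last lia.
  rewrite nth_ins_gt; last lia. rewrite (@nth_ins_lt v i v s i'.+1); try lia.
  move=> H; have := H ltac:(lia); by rewrite eqxx.
- subst i'; split => //. have hsz : i < size s by lia.
  by rewrite -(nth_ins_eq v v hsz) E nth_ins_eq.
Qed.

Lemma size_del i s : i < size s -> size (del i s) = (size s).-1.
Proof. move=> h; rewrite /del size_cat size_take size_drop h; lia. Qed.

Lemma nth_del_lt x0 i s k : k < i -> nth x0 (del i s) k = nth x0 s k.
Proof.
move=> h; rewrite /del nth_cat size_take; case: ifP => h1; first by rewrite nth_take.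
rewrite nth_drop nth_default ?nth_default //; move/negbT: h1; case: ifP; lia.
Qed.

Lemma nth_del_ge x0 i s k : i <= k -> i < size s -> nth x0 (del i s) k = nth x0 s k.+1.
Proof.
move=> h hs; rewrite /del nth_cat size_take hs; case: ifP => h1; first lia.
rewrite nth_drop; congr nth; lia.
Qed.

Lemma del_inj i i' s : sorted (fun p q : T => p != q) s -> i' < size s ->
  del i s = del i' s -> i = i'.
Proof.
move=> hs hi E.
have hi2 : i < size s.
  rewrite ltnNge; apply/negP => h.
  have : del i s = s by rewrite /del take_oversize // drop_oversize ?cats0 //; lia.
  move=> h2; have := congr1 size E; rewrite h2 size_del //; lia.
case: s hs hi hi2 E => [|x0 s'] // hs hi hi2 E.
case: (ltngtP i i') => h //; exfalso.
- have e1 : nth x0 (x0 :: s') i.+1 = nth x0 (x0 :: s') i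
    by rewrite -(nth_del_ge x0 (leqnn i) hi2) E nth_del_lt.
  have := @sorted_nth_neq x0 _ i hs; rewrite e1 eqxx => H; have := H ltac:(lia); by [].
- have e1 : nth x0 (x0 :: s') i'.+1 = nth x0 (x0 :: s') i'
    by rewrite -(nth_del_ge x0 (leqnn i') hi) -E nth_del_lt.
  have := @sorted_nth_neq x0 _ i' hs; rewrite e1 eqxx => H; have := H ltac:(lia); by [].
Qed.

End Gen.
Arguments take_szE {T} m [a l n].
Arguments drop_szE {T} m [a l n].
Arguments nth_szE {T} x0 m [a l n].


Section Main.
Variables (T : finType) (e : rel T) (F : seq T -> symb T).
Hypothesis F_valid : valid_rule e F.
Local Notation d := (dist e).
Local Notation neq := (fun p q : T => p != q).

Lemma dist_xx x : d x x = 0.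
Proof. by rewrite /dist /= eqxx. Qed.

Lemma dist0 x y : d x y = 0 -> x = y.
Proof. rewrite /dist /=; by case: eqP. Qed.

Lemma len_mid a x l : len e (a ++ x :: l) = len e (rcons a x) + len e (x :: l).
Proof.
case: a => [|a0 a] //=. rewrite -cats1 !pairmap_cat !sumn_cat /=; lia.
Qed.

Definition ne_eps (x : symb T) : bool := if x is Eps then false else true.
Definition P s k := ne_eps (F (take k.+2 s)).
Definition stj s := find (P s) (iota 0 (size s).-1).
Definition sts s := if stj s < (size s).-1 then F (take (stj s).+2 s) else Eps.

Lemma stj_char s j : j < (size s).-1 -> P s j -> (forall k, k < j -> ~~ P s k) -> stj s = j.
Proof.
move=> hj pj hk; rewrite /stj.
have hh : has (P s) (iota 0 (size s).-1) by apply/hasP; exists j => //; rewrite mem_iota.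
have hf := hh; rewrite has_find size_iota in hf.
have := nth_find 0 hh; rewrite nth_iota // add0n => pf.
case: (ltngtP (find (P s) (iota 0 (size s).-1)) j) => h //.
- by move: (hk _ h); rewrite pf.
- by have := before_find 0 h; rewrite nth_iota // add0n pj.
Qed.

Lemma stj_lt s : stj s < (size s).-1 -> P s (stj s) /\ forall k, k < stj s -> ~~ P s k.
Proof.
move=> h; have h' : has (P s) (iota 0 (size s).-1) by rewrite has_find size_iota.
split; first by have := nth_find 0 h'; rewrite nth_iota // add0n.
move=> k hk; have := before_find 0 hk; rewrite nth_iota ?add0n => [->//|].
apply: (ltn_trans hk); exact: h.
Qed.

Lemma stj_ge s : (size s).-1 <= stj s -> forall k, k < (size s).-1 -> ~~ P s k.
Proof.
move=> h k hk; have : ~~ has (P s) (iota 0 (size s).-1) by rewrite has_find size_iota -leqNgt.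
move/hasPn; apply; by rewrite mem_iota.
Qed.

Lemma sts_ne s X : sts s = X -> ne_eps X -> stj s < (size s).-1 /\ F (take (stj s).+2 s) = X.
Proof. rewrite /sts; case: ifP => // h <- //. Qed.


Lemma decomp3 (s : seq T) n : n.+2 <= size s -> exists a x y c, s = a ++ x :: y :: c /\ size a = n.
Proof.
move=> h; have E := cat_take_drop n s.
have hd : size (drop n s) = size s - n by rewrite size_drop.
case Ed: (drop n s) hd E => [|x [|y c]] /= hd E; try lia.
exists (take n s), x, y, c; split => //; rewrite size_takel //; lia.
Qed.

Lemma stA s v : isseq s -> sts s = Iota v ->
  let u := ins (stj s) v s in
  [/\ isseq u, stj u = (stj s).+1, sts u = Delta, del (stj s).+1 u = s &
      len e u = len e s /\ (stj s).+3 <= size u].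
Proof.
move=> hs hst.
have [hj hF] := sts_ne hst erefl. have [_ hk] := stj_lt hj.
move: hj hF hk; move Hj: (stj s) => j hj hF hk.
have [a [x [y [c [Es Ha]]]]] := decomp3 (n := j) (s := s) ltac:(lia).
subst s. rewrite -{}Ha in Hj hj hF hk *.
rewrite (take_szE 2) /= ?take0 in hF; last lia.
have hq : isseq (a ++ [:: x; y]).
  move: hs; rewrite /isseq !sorted_mid /= => /andP[_] /andP[-> /andP[-> _]].
  by rewrite andbT; case: (a).
have [V1 _] := F_valid.
have e1 : nth v (a ++ [:: x; y]) (size (a ++ [:: x; y])).-1 = y.
  by rewrite (nth_szE v 1) // size_cat /=; lia.
have e2 : nth v (a ++ [:: x; y]) (size (a ++ [:: x; y])).-2 = x.
  by rewrite (nth_szE v 0) // size_cat /=; lia.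
have e3 : take (size (a ++ [:: x; y])).-1 (a ++ [:: x; y]) = a ++ [:: x].
  by rewrite (take_szE 1) // size_cat /=; lia.
have := V1 _ _ hq ltac:(rewrite size_cat /=; lia) hF.
cbv zeta; rewrite e1 e2 e3 -!cats1 -!catA /= => -[nvx nvy dsum Feps Fdel].
have eu : ins (size a) v (a ++ [:: x, y & c]) = a ++ [:: x, v, y & c].
  by rewrite /ins (take_szE 1) // (drop_szE 1) //= ?take0 -catA.
have hu : size a < (size (a ++ [:: x, v, y & c])).-1 by rewrite size_cat /=; lia.
have sju : stj (a ++ [:: x, v, y & c]) = (size a).+1.
  apply: stj_char.
  - rewrite size_cat /=; lia.
  - by rewrite /P (take_szE 3) /= ?take0 ?Fdel //; lia.
  move=> k hk'; rewrite ltnS leq_eqVlt in hk'; case/orP: hk' => [/eqP ->|hk'].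
    by rewrite /P (take_szE 2) /= ?take0 ?Feps //; lia.
  by rewrite /P (@take_cat_eq _ a x (v :: y :: c) (y :: c) k.+2); [exact: hk | lia].
rewrite eu /=; split.
- move: hs; rewrite /isseq !sorted_mid /= => /andP[_] /andP[-> /andP[_ ->]].
  by rewrite (eq_sym x) nvx nvy; case: (a).
- exact: sju.
- rewrite /sts sju ifT; last by rewrite size_cat /=; lia.
  by rewrite (take_szE 3) /= ?take0 ?Fdel //; lia.
- by rewrite /del (take_szE 1) // (drop_szE 2) //= ?take0 -catA.
- rewrite !len_mid /= size_cat /=; split; lia.
Qed.


Lemma stB s : isseq s -> sts s = Delta ->
  exists x, [/\ 0 < stj s, isseq (del (stj s) s), stj (del (stj s) s) = (stj s).-1,
     sts (del (stj s) s) = Iota x & ins (stj s).-1 x (del (stj s) s) = s].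
Proof.
move=> hs hst.
have [hj hF] := sts_ne hst erefl. have [_ hk] := stj_lt hj.
move: hj hF hk; move Hj: (stj s) => j hj hF hk.
have [V1 V2] := F_valid.
have hq : isseq (take j.+2 s).
  move: hs; rewrite /isseq => /andP[_ h]; rewrite take_sorted // andbT.
  by case: (s) hj => [|z t].
have [h3 _] := V2 _ hq hF.
rewrite size_takel in h3; last lia.
have [a [w [x [c' [Es Ha]]]]] := decomp3 (n := j.-1) (s := s) ltac:(lia).
case: c' Es => [|y c] Es.
  exfalso; move: hj; rewrite Es size_cat /=; lia.
subst s. have Ha' : j = (size a).+1 by lia. rewrite {}Ha' in Hj hj hF hk h3 hq *. clear Ha.
have [_ V] := V2 _ hq hF.
rewrite (take_szE 3) /= ?take0 in hF hq V; last lia.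
rewrite size_cat /= in V. move: (V w); clear V.
have -> : (size a + 3).-2 = 1 + size a by lia.
have -> : (size a + 3).-1 = 2 + size a by lia.
have -> : (size a + 3 - 3) = 0 + size a by lia.
have n2 : nth w (a ++ [:: w; x; y]) (2 + size a) = y by rewrite (nth_szE w 2).
have n1 : nth w (a ++ [:: w; x; y]) (1 + size a) = x by rewrite (nth_szE w 1).
have n0 : nth w (a ++ [:: w; x; y]) (0 + size a) = w by rewrite (nth_szE w 0).
rewrite n0 n1 n2 (take_szE 1) //= ?take0.
rewrite -cats1 -catA /= => -[dsum Fi].
have nwx : w != x.
  by move: hs; rewrite /isseq sorted_mid /= => /andP[_] /andP[_] /andP[].
have nwy : w != y.
  apply/eqP => ewy; subst y.
  move: dsum; rewrite dist_xx => /eqP; rewrite addn_eq0 => /andP[/eqP /dist0 ewx _].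
  by rewrite ewx eqxx in nwx.
have eb : del (size a).+1 (a ++ [:: w, x, y & c]) = a ++ [:: w, y & c].
  by rewrite /del (take_szE 1) // (drop_szE 2) //= ?take0 -catA.
rewrite eb /=.
have sjb : stj (a ++ [:: w, y & c]) = size a.
  apply: stj_char.
  - rewrite size_cat /=; lia.
  - rewrite /P (take_szE 2) /= ?take0 ?Fi; exact: erefl.
  move=> k hk'.
  rewrite /P (@take_cat_eq _ a w (y :: c) (x :: y :: c) k.+2); [apply: hk; lia | lia].
exists x; split => //.
- move: hs; rewrite /isseq !sorted_mid /= => /andP[_] /andP[-> /and3P[_ _ ->]].
  by rewrite nwy; case: (a).
- rewrite /sts sjb ifT; last by rewrite size_cat /=; lia.
  by rewrite (take_szE 2) /= ?take0 ?Fi //; lia.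
- by rewrite /ins (take_szE 1) // (drop_szE 1) //= ?take0 -catA.
Qed.


Definition Mrel (a b : seq T) : Prop :=
  isseq b /\ exists v, sts b = Iota v /\ a = ins (stj b) v b.

Lemma M_char a b : Mrel a b ->
  [/\ isseq a, gedge e a b, sts a = Delta, b = del (stj a) a &
     exists v, sts b = Iota v /\ a = ins (stj b) v b].
Proof.
move=> [hb [v [hv ->]]].
have [h1 h2 h3 h4 [h5 h6]] := stA hb hv.
have [hj _] := sts_ne hv erefl.
split => //; last by exists v.
- split => //; exists (stj b).+1; split => //.
- by rewrite h2.
Qed.

Lemma stj_pref s t : stj s < (size s).-1 -> take (stj s).+2 t = take (stj s).+2 s ->
  stj t = stj s /\ sts t = sts s.
Proof.
move=> hj E; have [pj hk] := stj_lt hj; move: hj E pj hk.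
move Hj: (stj s) => j hj E pj hk.
have hsz : j.+2 <= size t.
  have := congr1 size E; rewrite !size_take; case: ifP; case: ifP; lia.
have ek : forall k, k <= j -> P t k = P s k.
  move=> k hk'; rewrite /P -(@take_takel _ k.+2 j.+2 t) // E take_takel //.
have st : stj t = j.
  apply: stj_char; first lia.
  - by rewrite ek.
  - by move=> k hk'; rewrite ek ?hk //; lia.
split => //; rewrite /sts st Hj hj ifT; last lia.
by rewrite E.
Qed.

Lemma sts_last s : 2 <= size s -> (size s).-2 <= stj s ->
  sts s = F s /\ (ne_eps (F s) -> stj s = (size s).-2).
Proof.
move=> h2 h.
case: (ltnP (stj s) (size s).-1) => hlt.
  have e1 : stj s = (size s).-2 by lia.
  rewrite /sts hlt e1; have -> : (size s).-2.+2 = size s by lia.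
  by rewrite take_size.
have := stj_ge hlt (k := (size s).-2) ltac:(lia).
rewrite /P; have -> : (size s).-2.+2 = size s by lia.
rewrite take_size /sts ltnNge hlt /=.
by case: (F s).
Qed.

End Main.

Theorem lemma3p2 (T : finType) (e : rel T)
  (e_sym : symmetric e) (e_irr : irreflexive e)
  (e_conn : forall x y : T, connect e x y)
  (F : seq T -> symb T) (F_valid : valid_rule e F) :
  exists M : seq T -> seq T -> Prop,
    is_prefix_matching e M /\ generated_by F M.
Proof.
exists (Mrel F).
have Mc := M_char F_valid.
split; [split; [split|split]|].
- by move=> a b /Mc [].
- move=> a b a' b' /Mc [ha _ da eb [v [hv ea]]] /Mc [ha' _ da' eb' [v' [hv' ea']]].
  case=> [E|[E|[E|E]]].
  + by split => //; rewrite eb eb' -E.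
  + by rewrite -E da in hv'.
  + by rewrite E da' in hv.
  + rewrite -E hv in hv'; case: hv' => ev; subst v'.
    by split => //; rewrite ea ea' E.
- move=> s i v hs [_ [v' [hv' E]]] t ht Et.
  have [hj _] := sts_ne hv' erefl.
  have [h1 _ _ _ _] := stA F_valid hs hv'.
  move: (h1); rewrite -E => /andP[_ hso].
  have hsz : (stj F s).+2 <= size s by lia.
  have [ei ev] := ins_inj hso hsz E. subst i v'.
  have [st1 st2] := stj_pref hj Et.
  split => //; exists v; by rewrite st1 st2 hv'.
- move=> s i hs /Mc [_ _ hd eb _] t ht Et.
  have [hj _] := sts_ne hd erefl.
  have ei : i = stj F s.
    apply: (del_inj (s := s)); [by case/andP: hs | lia | exact: eb].
  subst i.
  have [st1 st2] := stj_pref hj Et.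
  rewrite hd in st2.
  have [x [_ hb sjb stb eins]] := stB F_valid ht st2.
  rewrite st1 in hb sjb stb eins.
  split => //; exists x; split => //.
  by rewrite sjb eins.
- move=> s hs h2 hun.
  have hp : isseq (take (size s).-1 s).
    case/andP: hs => hne hso; rewrite /isseq take_sorted // andbT.
    by case: (s) h2 => [|z [|w t]].
  have C : (size s).-2 <= stj F s.
    rewrite leqNgt; apply/negP => hlt.
    have hlt1 : stj F s < (size s).-1 by lia.
    have [pj _] := stj_lt hlt1.
    have Et : take (stj F s).+2 (take (size s).-1 s) = take (stj F s).+2 s
      by rewrite take_takel //; lia.
    have [st1 st2] := stj_pref hlt1 Et.
    apply: hun; move: st2; rewrite {2}/sts hlt1.
    move: pj; rewrite /P; case Ef: (F (take (stj F s).+2 s)) => [|w|] // _ st2.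
    + exists (ins (stj F (take (size s).-1 s)) w (take (size s).-1 s)); right.
      by split => //; exists w.
    + have [x [_ hb sjb stb eins]] := stB F_valid hp st2.
      exists (del (stj F (take (size s).-1 s)) (take (size s).-1 s)); left.
      split => //; exists x; split => //; by rewrite sjb.
  have [ss sj] := sts_last h2 C.
  split.
  + move=> v; split.
    * move=> [_ [v' [hv' E]]].
      have [hj _] := sts_ne hv' erefl.
      have [h1 _ _ _ _] := stA F_valid hs hv'.
      move: (h1); rewrite -E => /andP[_ hso].
      have hsz : (stj F s).+2 <= size s by lia.
      have [_ ev] := ins_inj hso hsz E. subst v'.
      by rewrite -ss.
    * move=> hF; split => //; exists v; split; first by rewrite ss.
      by rewrite sj ?hF.
  + split.
    * by move=> /Mc [_ _ hd _ _]; rewrite -ss.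
    * move=> hF. have hd : sts F s = Delta by rewrite ss.
      have sjs : stj F s = (size s).-2 by rewrite sj ?hF.
      have [x [_ hb sjb stb eins]] := stB F_valid hs hd.
      rewrite sjs in hb sjb stb eins.
      split => //; exists x; split => //; by rewrite sjb.
Qed.
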